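(* Assume: $g(x,u)\in[0,\infty]$ for all $x\in X$, $u\in U(x)$; $S^0\subset X$ and a stationary policy $\mu^0$ satisfy $f(x,\mu^0(x))\in S^0$ for all $x\in S^0$; for each $x\in X$, $\bar U(x)\subset U(x)$ is nonempty, with $\mu^0(x)\in\bar U(x)$ for all $x\in S^0$; and for every $J:X\to[0,\infty]$ and every $x\in X$ the infimum $\inf_{u\in\bar U(x)}\{g(x,u)+J(f(x,u))\}$ is attained. Let $\bar J_{S^0}(x)=J_{\mu^0}(x)$ for $x\in S^0$ and $\bar J_{S^0}(x)=\infty$ otherwise. Fix $\ell\ge1$, and let $\tilde J_{S^0}(x)$ be the optimal value of minimizing $\sum_{k=0}^{\ell-1}g(x_k,u_k)+\bar J_{S^0}(x_\ell)$ over $(u_0,\dots,u_{\ell-1})$ subject to $x_0=x$, $x_{k+1}=f(x_k,u_k)$, $u_k\in\bar U(x_k)$ for $k=0,\dots,\ell-1$, and let $\tilde\mu(x)=\tilde u_0$, the first control of a minimizing sequence $(\tilde u_0,\dots,\tilde u_{\ell-1})$ of this problem. Then $$J_{\tilde\mu}(x)\le\tilde J_{S^0}(x)\le\bar J_{S^0}(x)\quad\text{for all }x\in X.$$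
   Context: Deterministic infinite-horizon problem: arbitrary state space $X$ and control space $U$, dynamics $x_{k+1}=f(x_k,u_k)$ with $f:X\times U\to X$, nonempty control constraint sets $U(x)\subset U$. A stationary policy is a map $\mu:X\to U$ with $\mu(x)\in U(x)$ for all $x$; its cost function is $J_\mu(x_0)=\sum_{k=0}^\infty g(x_k,\mu(x_k))\in[0,\infty]$, where $x_{k+1}=f(x_k,\mu(x_k))$. Equivalently to the definition above, $\tilde J_{S^0}=J_\ell$ where $J_0=\bar J_{S^0}$, $J_{k+1}(x)=\min_{u\in\bar U(x)}\{g(x,u)+J_k(f(x,u))\}$, and $\tilde\mu(x)\in\arg\min_{u\in\bar U(x)}\{g(x,u)+J_{\ell-1}(f(x,u))\}$. *)

(* Defs.v *)
From HB Require Import structures.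
From mathcomp Require Import all_boot all_order all_algebra.
From mathcomp Require Import all_classical all_reals.
From mathcomp Require Import ereal topology normedtype sequences.
Set Implicit Arguments. Unset Strict Implicit. Unset Printing Implicit Defensive.
Import Order.TTheory GRing.Theory Num.Theory.
Local Open Scope classical_set_scope.
Local Open Scope ereal_scope.

Section DP.
Context {R : realType} {X U : Type}.

Definition traj (f : X -> U -> X) (mu : X -> U) (x0 : X) (k : nat) : X :=
  iter k (fun y => f y (mu y)) x0.

Definition Jpol (f : X -> U -> X) (g : X -> U -> \bar R) (mu : X -> U)
  (x0 : X) : \bar R :=
  \sum_(0 <= k <oo) g (traj f mu x0 k) (mu (traj f mu x0 k)).

Definition is_policy (Uc : X -> set U) (mu : X -> U) : Prop :=
  forall x, Uc x (mu x).

Definition Jbar (f : X -> U -> X) (g : X -> U -> \bar R) (S0 : set X)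
  (mu0 : X -> U) (x : X) : \bar R :=
  if `[< S0 x >] then Jpol f g mu0 x else +oo.

Fixpoint ctraj (f : X -> U -> X) (x0 : X) (us : nat -> U) (k : nat) : X :=
  match k with
  | 0 => x0
  | k'.+1 => f (ctraj f x0 us k') (us k')
  end.

Definition feasible (f : X -> U -> X) (Ubar : X -> set U) (l : nat)
  (x0 : X) (us : nat -> U) : Prop :=
  forall k, (k < l)%N -> Ubar (ctraj f x0 us k) (us k).

Definition lcost (f : X -> U -> X) (g : X -> U -> \bar R) (J : X -> \bar R)
  (l : nat) (x0 : X) (us : nat -> U) : \bar R :=
  \sum_(k < l) g (ctraj f x0 us k) (us k) + J (ctraj f x0 us l).

Definition Jtilde (f : X -> U -> X) (g : X -> U -> \bar R) (Ubar : X -> set U)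
  (J : X -> \bar R) (l : nat) (x0 : X) : \bar R :=
  ereal_inf [set lcost f g J l x0 us | us in [set us | feasible f Ubar l x0 us]].

End DP.

(* Main.v *)
Require Import Defs.
From HB Require Import structures.
From mathcomp Require Import all_boot all_order all_algebra.
From mathcomp Require Import all_classical all_reals.
From mathcomp Require Import ereal topology normedtype sequences.
Import Order.TTheory GRing.Theory Num.Theory.
Local Open Scope classical_set_scope.
Local Open Scope ereal_scope.

Lemma ctraj_shift (X U : Type) (f : X -> U -> X) x (us : nat -> U) k :
  ctraj f x us k.+1 = ctraj f (f x (us 0%N)) (fun j => us j.+1) k.
Proof. by elim: k => [|k IH] //=; rewrite -IH. Qed.

Lemma ctraj_ext (X U : Type) (f : X -> U -> X) x (us vs : nat -> U) k :
  (forall j, (j < k)%N -> us j = vs j) -> ctraj f x us k = ctraj f x vs k.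
Proof.
elim: k => [|k IH] H //=.
rewrite IH; last by move=> j jk; apply: H; apply: ltnW.
by rewrite H.
Qed.

Lemma Jpol_step (R : realType) (X U : Type) (f : X -> U -> X)
  (g : X -> U -> \bar R) (Uc : X -> set U) mu :
  (forall x u, Uc x u -> 0 <= g x u) -> is_policy Uc mu ->
  forall x, Jpol f g mu x = g x (mu x) + Jpol f g mu (f x (mu x)).
Proof.
move=> g0 pol x; rewrite /Jpol.
rewrite nneseries_recl //; last by move=> k _; apply: g0; apply: pol.
congr (_ + _).
rewrite -(nneseries_addn 1); last by move=> i; apply: g0; apply: pol.
apply: congr_lim; apply: funext => n; apply: eq_bigr => i _.
by rewrite addn1 /traj iterSr.
Qed.

Lemma addRE (R : realType) (a b : \bar R) : (a + b)%R = a + b.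
Proof. by []. Qed.

Lemma Jtilde_mono (R : realType) (X U : Type) (f : X -> U -> X)
  (g : X -> U -> \bar R) (Uc : X -> set U) (S0 : set X) (mu0 : X -> U)
  (Ubar : X -> set U) :
  (forall x u, Uc x u -> 0 <= g x u) ->
  is_policy Uc mu0 ->
  (forall x, S0 x -> S0 (f x (mu0 x))) ->
  (forall x, Ubar x `<=` Uc x) ->
  (forall x, S0 x -> Ubar x (mu0 x)) ->
  forall m y, Jtilde f g Ubar (Jbar f g S0 mu0) m.+1 y <=
              Jtilde f g Ubar (Jbar f g S0 mu0) m y.
Proof.
move=> g0 pol S0inv sub S0U m y.
set J := Jbar f g S0 mu0.
apply/ereal_infP => _ [vs fvs <-].
set z := ctraj f y vs m.
have sum0 : 0 <= \sum_(k < m) g (ctraj f y vs k) (vs k).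
  by apply: sume_ge0 => k _; apply: g0; apply: sub; apply: fvs.
rewrite /lcost -/z.
case: (asboolP (S0 z)) => Sz; last first.
  have -> : J z = +oo by rewrite /J /Jbar; case: asboolP.
  rewrite (@addey R) ?leey //.
  by rewrite gt_eqF // (lt_le_trans _ sum0) // ltNy0.
pose vs' := fun k => if k == m then mu0 z else vs k.
have E : forall k, (k <= m)%N -> ctraj f y vs' k = ctraj f y vs k.
  move=> k km; apply: ctraj_ext => j jk.
  by rewrite /vs' (ltn_eqF (leq_trans jk km)).
apply: ereal_inf_le; exists (lcost f g J m.+1 y vs'); last first.
  rewrite /lcost big_ord_recr /=.
  have -> : vs' m = mu0 z by rewrite /vs' eqxx.
  have -> : ctraj f y vs' m = z by rewrite E.
  have Jz : J z = (g z (mu0 z) + J (f z (mu0 z)))%R.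
    rewrite /J /Jbar; case: asboolP => // _; case: asboolP => // nS.
      by rewrite (@Jpol_step R X U f g Uc mu0 g0 pol).
    by exfalso; apply: nS; apply: S0inv.
  rewrite Jz addrA.
  have -> : (\sum_(i < m) g (ctraj f y vs' i) (vs' i) = \sum_(k < m) g (ctraj f y vs k) (vs k))%R.
    apply: eq_bigr => i _.
    by rewrite /vs' (ltn_eqF (ltn_ord i)) E // ltnW.
  exact: lexx.
have fvs' : feasible f Ubar m.+1 y vs'.
  move=> k; rewrite ltnS leq_eqVlt => /orP[/eqP ->|km].
    rewrite (E m (leqnn m)) -/z /vs' eqxx; exact: S0U.
  rewrite (E k (ltnW km)) /vs' (ltn_eqF km); exact: fvs.
by exists vs'.
Qed.

Lemma Jbar_ge0 (R : realType) (X U : Type) (f : X -> U -> X)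
  (g : X -> U -> \bar R) (Uc : X -> set U) (S0 : set X) (mu0 : X -> U) :
  (forall x u, Uc x u -> 0 <= g x u) -> is_policy Uc mu0 ->
  forall y, 0 <= Jbar f g S0 mu0 y.
Proof.
move=> g0 pol y; rewrite /Jbar; case: asboolP => _ //.
by apply: nneseries_ge0 => n _ _; apply: g0; apply: pol.
Qed.

Theorem proposition5 (R : realType) (X U : Type)
  (f : X -> U -> X) (g : X -> U -> \bar R) (Uc : X -> set U)
  (S0 : set X) (mu0 : X -> U) (Ubar : X -> set U) (l : nat)
  (mut : X -> U) :
  (forall x, Uc x !=set0) ->
  (forall x u, Uc x u -> 0 <= g x u) ->
  is_policy Uc mu0 ->
  (forall x, S0 x -> S0 (f x (mu0 x))) ->
  (forall x, Ubar x `<=` Uc x) ->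
  (forall x, Ubar x !=set0) ->
  (forall x, S0 x -> Ubar x (mu0 x)) ->
  (forall (J : X -> \bar R), (forall y, 0 <= J y) -> forall x,
     exists2 u, Ubar x u & forall v, Ubar x v -> g x u + J (f x u) <= g x v + J (f x v)) ->
  (1 <= l)%N ->
  (forall x, exists us, [/\ feasible f Ubar l x us,
       lcost f g (Jbar f g S0 mu0) l x us = Jtilde f g Ubar (Jbar f g S0 mu0) l x
     & mut x = us 0%N]) ->
  forall x,
    Jpol f g mut x <= Jtilde f g Ubar (Jbar f g S0 mu0) l x /\
    Jtilde f g Ubar (Jbar f g S0 mu0) l x <= Jbar f g S0 mu0 x.
Proof.
move=> _ g0 pol S0inv sub _ S0U _ l1 opt.
have mono := @Jtilde_mono R X U f g Uc S0 mu0 Ubar g0 pol S0inv sub S0U.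
have J0 := @Jbar_ge0 R X U f g Uc S0 mu0 g0 pol.
set J := Jbar f g S0 mu0 in mono J0 opt *.
have upper : forall n y, Jtilde f g Ubar J n y <= J y.
  elim=> [|n IH] y; last exact: le_trans (mono n y) (IH y).
  apply: ereal_inf_le; exists (J y) => //.
  exists (fun _ => mu0 y) => //.
  by rewrite /lcost big_ord0 add0r.
have Jt0 : forall n y, 0 <= Jtilde f g Ubar J n y.
  move=> n y; apply/ereal_infP => _ [us fus <-].
  rewrite /lcost; apply: adde_ge0 => //.
  by apply: sume_ge0 => k _; apply: g0; apply: sub; exact: (fus k (ltn_ord k)).
case: l l1 opt => [//|m] _ opt.
set Jt := Jtilde f g Ubar J m.+1 in Jt0 upper *.
have mutU : forall y, Uc y (mut y).
  move=> y; have [us [fus _ ->]] := opt y; apply: sub; exact: (fus 0%N (ltn0Sn _)).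
have step : forall y, (g y (mut y) + Jt (f y (mut y)))%R <= Jt y.
  move=> y; have [us [fus eus ->]] := opt y.
  rewrite /Jt -eus /lcost big_ord_recl /= -addrA.
  apply: leeD => //.
  set y' := f y (us 0%N).
  have fs : feasible f Ubar m y' (fun j => us j.+1).
    move=> k km; rewrite /y' -ctraj_shift; exact: (fus k.+1 km).
  apply: le_trans (mono m y') _.
  apply: ereal_inf_le; exists (lcost f g J m y' (fun j => us j.+1)).
    by exists (fun j => us j.+1).
  rewrite /lcost le_eqVlt; apply/orP; left; apply/eqP; congr (_ + _)%R.
    by apply: eq_bigr => i _; rewrite -ctraj_shift add0n.
  by rewrite -ctraj_shift.
have partial : forall N y,
    ((\sum_(k < N) g (traj f mut y k) (mut (traj f mut y k))) + Jt (traj f mut y N))%R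
    <= Jt y.
  elim=> [|N IH] y.
    by rewrite big_ord0 add0r.
  rewrite big_ord_recl -addrA.
  apply: le_trans (step y).
  apply: leeD => //.
  have -> : traj f mut y N.+1 = traj f mut (f y (mut y)) N by rewrite /traj iterSr.
  have -> : (\sum_(i < N) g (traj f mut y (lift ord0 i)) (mut (traj f mut y (lift ord0 i))) =
            \sum_(k < N) g (traj f mut (f y (mut y)) k) (mut (traj f mut (f y (mut y)) k)))%R.
    by apply: eq_bigr => i _; rewrite lift0 /traj iterSr.
  exact: IH.
split; last exact: upper.
rewrite /Jpol; apply: lime_le.
  by apply: is_cvg_ereal_nneg_natsum => n _; apply: g0; apply: mutU.
near=> N.
rewrite big_mkord.
apply: le_trans (partial N x).
apply: leeDl; exact: (Jt0 m.+1 (traj f mut x N)).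
Unshelve. all: by end_near.
Qed.
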